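(* Let $A$ be a noetherian ring and let $M$ be a finitely generated $A$-module. Then \[\mathcal{R}(M)=\operatorname{im}\bigl(\operatorname{Sym}(M)\to\Gamma(M^\ast)^\vee\bigr),\] where $\operatorname{Sym}(M)\to\Gamma(M^\ast)^\vee$ is the homomorphism of graded $A$-algebras induced (by the universal property of the symmetric algebra) by the canonical module homomorphism $M\to M^{\ast\ast}$, where $M^{\ast\ast}=\operatorname{Hom}_A(\Gamma^1(M^\ast),A)$ is the degree $1$ part of $\Gamma(M^\ast)^\vee$. (Here ''equal'' means that the quotient $\operatorname{Sym}(M)/\bigcap_g L_g$ and the image are the same quotient of $\operatorname{Sym}(M)$, i.e. $\bigcap_g L_g$ is the kernel of $\operatorname{Sym}(M)\to\Gamma(M^\ast)^\vee$.)
   Context: All rings are commutative with unit, algebras are commutative, associative and unital. $M^\ast=\operatorname{Hom}_A(M,A)$. The Rees algebra of a finitely generated $A$-module $M$ is $\mathcal{R}(M)=\operatorname{Sym}(M)/\bigcap_g L_g$, where $g$ runs over all $A$-module homomorphisms $g\colon M\to E$ with $E$ a free $A$-module, and $L_g=\ker(\operatorname{Sym}(g)\colon\operatorname{Sym}(M)\to\operatorname{Sym}(E))$. The algebra of divided powers of an $A$-module $N$ is $\Gamma(N)=A[X(n,x)]_{(n,x)\in\mathbb{N}\times N}/I$, where $I$ is generated by $X(0,x)-1$, $X(n,fx)-f^nX(n,x)$, $X(m,x)X(n,x)-\binom{m+n}{m}X(m+n,x)$, and $X(n,x+y)-\sum_{i+j=n}X(i,x)X(j,y)$ for all $x,y\in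 N$, $m,n\in\mathbb{N}$, $f\in A$; $\gamma^n_N(x)$ denotes the class of $X(n,x)$ and $\times$ the multiplication. It is graded with $\Gamma^n(N)$ spanned by products $\gamma^{n_1}_N(x_1)\times\dots\times\gamma^{n_k}_N(x_k)$ with $n_1+\dots+n_k=n$; $\Gamma^1(N)=N$. $\Gamma(N)$ has comultiplication $\Delta\colon\Gamma(N)\to\Gamma(N\oplus N)\cong\Gamma(N)\otimes_A\Gamma(N)$ induced by the diagonal, given by $\gamma^n_N(x)\mapsto\sum_{i+j=n}\gamma^i_N(x)\otimes\gamma^j_N(x)$, and counit induced by $N\to 0$. For a graded $A$-algebra $B=\bigoplus_{n\ge0}B_n$, the graded dual is $B^\vee=\bigoplus_{n\ge 0}\operatorname{Hom}_A(B_n,A)$. For $B=\Gamma(N)$, $\Gamma(N)^\vee$ is a graded $A$-algebra with product $u\bullet v$ (for $u\in\Gamma^i(N)^\ast$, $v\in\Gamma^j(N)^\ast$) defined by $(u\bullet v)(\gamma)=(u\otimes v)(\Delta(\gamma))$ for $\gamma\in\Gamma^{i+j}(N)$, and unit dual to the counit. *)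

(* Defs.v *)
From HB Require Import structures.
From mathcomp Require Import all_boot all_order all_algebra.
From mathcomp Require Import boolp.
From mathcomp Require Import finmap.
From mathcomp.multinomials Require Import monalg.

Set Implicit Arguments.
Unset Strict Implicit.
Unset Printing Implicit Defensive.

Import GRing.Theory.
Local Open Scope ring_scope.

Definition is_ideal (A : comNzRingType) (I : A -> Prop) : Prop :=
  [/\ I 0, (forall x y, I x -> I y -> I (x + y)) & (forall a x, I x -> I (a * x))].

Definition ideal_fg (A : comNzRingType) (I : A -> Prop) : Prop :=
  exists s : seq A, forall x,
    I x <-> exists c : 'I_(size s) -> A, x = \sum_(i < size s) c i * s`_i.

Definition noetherian_ring (A : comNzRingType) : Prop :=
  forall I : A -> Prop, is_ideal I -> ideal_fg I.

Definition module_fg (A : comNzRingType) (M : lmodType A) : Prop :=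
  exists s : seq M, forall m : M,
    exists c : 'I_(size s) -> A, m = \sum_(i < size s) c i *: s`_i.

Definition cmeval (I : choiceType) (R : nzRingType) (f : I -> R) (k : {cmonom I}) : R :=
  \prod_(i <- finsupp k) f i ^+ k i.

(* Sym(M) is the quotient of the polynomial algebra SymPre M =         *)
(* A[X_m : m in M] by the linearity relations X_(m+m') - X_m - X_m',   *)
(* X_(a m) - a X_m.  Elements of Sym(M) are represented by elements of *)
(* SymPre M; all maps out of Sym(M) below are given on SymPre M and    *)
(* factor through Sym(M).  The degree of a monomial is mdeg.           *)

Definition SymPre (A : comNzRingType) (M : lmodType A) := {malg A[{cmonom M}]}.

Definition mvar (I : choiceType) (A : comNzRingType) (i : I) : {malg A[{cmonom I}]} :=
  << ucm i >>.

(* A free A-module with basis I is {malg A[I]} (finitely supported maps I -> A);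
   its symmetric algebra is the polynomial algebra {malg A[{cmonom I}]}.
   linpoly e is the image of e in Sym^1(E). *)
Definition linpoly (A : comNzRingType) (I : choiceType) (e : {malg A[I]})
  : {malg A[{cmonom I}]} :=
  \sum_(i <- msupp e) e@_i *: mvar A i.

Definition Symmap (A : comNzRingType) (M : lmodType A) (I : choiceType)
  (g : {linear M -> {malg A[I]}}) (s : SymPre M) : {malg A[{cmonom I}]} :=
  \sum_(k <- msupp s) s@_k *: cmeval (fun m => linpoly (g m)) k.

Definition in_all_Lg (A : comNzRingType) (M : lmodType A) (s : SymPre M) : Prop :=
  forall (I : choiceType) (g : {linear M -> {malg A[I]}}), Symmap g s = 0.

Record dual (A : comNzRingType) (M : lmodType A) := Dual {
  dfun :> M -> A;
  dfun_lin : forall (a : A) (x y : M), dfun (a *: x + y) = a * dfun x + dfun y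
}.

HB.instance Definition _ (A : comNzRingType) (M : lmodType A) :=
  gen_eqMixin (dual M).
HB.instance Definition _ (A : comNzRingType) (M : lmodType A) :=
  gen_choiceMixin (dual M).

Section DualOps.
Variables (A : comNzRingType) (M : lmodType A).

Lemma dadd_lin (x y : dual M) (a : A) (u v : M) :
  (fun m => x m + y m) (a *: u + v) =
  a * (fun m => x m + y m) u + (fun m => x m + y m) v.
Proof.
by rewrite /= !dfun_lin mulrDr !addrA; congr (_ + _); rewrite -!addrA; congr (_ + _);
  rewrite addrC.
Qed.

Definition dadd (x y : dual M) : dual M := @Dual A M _ (dadd_lin x y).

Lemma dscale_lin (f : A) (x : dual M) (a : A) (u v : M) :
  (fun m => f * x m) (a *: u + v) = a * (fun m => f * x m) u + (fun m => f * x m) v.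
Proof. by rewrite /= dfun_lin mulrDr mulrCA. Qed.

Definition dscale (f : A) (x : dual M) : dual M := @Dual A M _ (dscale_lin f x).
End DualOps.

(* Divided powers of N = M^*.                                          *)
(* GPre M is the polynomial algebra A[X(n,x)]_{(n,x) in N x N};        *)
(* Gamma(N) = GPre M / I with I generated by the elements satisfying   *)
(* gamma_gen below.  X(n,x) has degree n; Gamma^n(N) is the image of   *)
(* the degree-n part of GPre M (mwt = weighted degree of a monomial).  *)

Definition GVar (A : comNzRingType) (M : lmodType A) := (nat * dual M)%type.
Definition GPre (A : comNzRingType) (M : lmodType A) := {malg A[{cmonom (GVar M)}]}.

Definition GX (A : comNzRingType) (M : lmodType A) (n : nat) (x : dual M) : GPre M :=
  mvar A ((n, x) : GVar M).

Definition mwt (A : comNzRingType) (M : lmodType A) (k : {cmonom (GVar M)}) : nat :=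
  (\sum_(v <- finsupp k) k v * v.1)%N.

(* generators of the ideal I (documentation of Gamma; the functionals
   built below all vanish on I, i.e. they are functionals on Gamma) *)
Definition gamma_gen (A : comNzRingType) (M : lmodType A) (r : GPre M) : Prop :=
  (exists x, r = GX 0 x - 1) \/
  (exists n f x, r = GX n (dscale f x) - (f ^+ n) *: GX n x) \/
  (exists m n x, r = GX m x * GX n x - ('C(m + n, m))%:R *: GX (m + n) x) \/
  (exists n x y, r = GX n (dadd x y) - \sum_(i < n.+1) GX i x * GX (n - i) y).

(* A-linear functionals on GPre M are given by their values on monomials;
   Gamma^n(N)^* is identified with the functionals on the degree-n part
   of GPre M vanishing on I. *)
Definition GFun (A : comNzRingType) (M : lmodType A) := {cmonom (GVar M)} -> A.

Definition glin (A : comNzRingType) (M : lmodType A) (u : GFun M) (p : GPre M) : A :=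
  \sum_(k <- msupp p) p@_k * u k.

Definition in_GammaDual (A : comNzRingType) (M : lmodType A) (n : nat) (u : GFun M) : Prop :=
  (forall p r, gamma_gen r -> glin u (p * r) = 0) /\
  (forall k, mwt k != n -> u k = 0).

(* Comultiplication, lifted to GPre M:  GPre M -> GPre M (x) GPre M,
   where GPre M (x) GPre M is realized as {malg (GPre M)[{cmonom (GVar M)}]}
   (left tensor factor = coefficients, right factor = monomials). *)
Definition GPre2 (A : comNzRingType) (M : lmodType A) := {malg (GPre M)[{cmonom (GVar M)}]}.

Definition DeltaVar (A : comNzRingType) (M : lmodType A) (v : GVar M) : GPre2 M :=
  \sum_(i < v.1.+1) (GX i v.2)%:MP * mvar (GPre M) ((v.1 - i)%N, v.2).

Definition Delta (A : comNzRingType) (M : lmodType A) (p : GPre M) : GPre2 M :=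
  \sum_(k <- msupp p) ((p@_k)%:MP : GPre M)%:MP * cmeval (@DeltaVar A M) k.

(* product of the graded dual:  (u . v)(g) = (u (x) v)(Delta g) *)
Definition gdot (A : comNzRingType) (M : lmodType A) (u v : GFun M) : GFun M :=
  fun k => let q := Delta (<< k >> : GPre M) in
           \sum_(j <- msupp q) glin u q@_j * v j.

(* unit of the graded dual: dual to the counit induced by N -> 0,
   i.e. X(n,x) |-> (n == 0) *)
Definition geps (A : comNzRingType) (M : lmodType A) : GFun M :=
  fun k => cmeval (fun v : GVar M => ((v.1 == 0)%N)%:R : A) k.

(* the canonical map M -> M^** = Hom_A(Gamma^1(M^* ), A), m |-> (x |-> x(m)),
   with Gamma^1(N) = N via x |-> gamma^1(x); the degree-1 monomials of
   GPre M are X(1,x) * prod X(0,y_j), whose class in Gamma is gamma^1(x). *)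
Definition gev (A : comNzRingType) (M : lmodType A) (m : M) : GFun M :=
  fun k => if mwt k == 1%N
           then \sum_(v <- finsupp k | v.1 == 1%N) v.2 m
           else 0.

(* image of a monomial of Sym(M) under the algebra map Sym(M) -> Gamma(M^* )^v *)
Definition gev_mon (A : comNzRingType) (M : lmodType A) (k : {cmonom M}) : GFun M :=
  \big[@gdot A M/@geps A M]_(m <- finsupp k) iter (k m) (gdot (gev m)) (@geps A M).

(* degree-n component of the image of s in Gamma(M^* )^v, as a functional *)
Definition SymToGammaDual (A : comNzRingType) (M : lmodType A) (n : nat)
  (s : SymPre M) : GFun M :=
  fun mu => \sum_(k <- msupp s | mdeg k == n) s@_k * gev_mon k mu.

(* s lies in the kernel of Sym(M) -> Gamma(M^* )^v: every graded
   component vanishes on Gamma^n(M^* ), i.e. on all degree-n monomials *)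
Definition in_ker_SymToGammaDual (A : comNzRingType) (M : lmodType A) (s : SymPre M) : Prop :=
  forall (n : nat) (mu : {cmonom (GVar M)}), mwt mu = n -> SymToGammaDual n s mu = 0.

(* Main.v *)
Require Import Defs.
From HB Require Import structures.
From mathcomp Require Import all_boot all_order all_algebra.
From mathcomp Require Import boolp.
From mathcomp Require Import finmap.
From mathcomp.multinomials Require Import monalg.

Set Implicit Arguments.
Unset Strict Implicit.
Unset Printing Implicit Defensive.
Import GRing.Theory.
Local Open Scope ring_scope.
Local Notation "1" := (@mone _) : monom_scope.
Local Notation "x * y" := (mmul x y) : monom_scope.



Section Cm.
Variable J : choiceType.

Definition setj (j : J) (d : nat) (c : {cmonom J}) : {cmonom J} :=
  [cmonom (if i == j then d else c i) | i in j |` finsupp c]%M.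

Lemma setjE j d c i : setj j d c i = if i == j then d else c i.
Proof.
rewrite /setj cmE fsfun_fun in_fsetU in_fset1.
by case: eqVneq => [->|_] //=; case: finsuppP.
Qed.

Lemma cm_eval_big (T : Type) (r : seq T) (F : T -> {cmonom J}) i :
  (\big[mmul/1%M]_(x <- r) F x) i = (\sum_(x <- r) F x i)%N.
Proof. exact: (big_morph (fun k : {cmonom J} => k i) (fun a b => cmM i a b) (cm1 i)). Qed.

Lemma ucm_inj : injective (@ucm J).
Proof. by move=> i j /eqP/cmP/(_ j); rewrite !cmU eqxx; case: eqP. Qed.

Lemma sum_sub (T : eqType) (s1 s2 : seq T) (F : T -> nat) :
  uniq s1 -> uniq s2 -> {subset s1 <= s2} ->
  (forall x, x \in s2 -> x \notin s1 -> F x = 0%N) ->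
  (\sum_(x <- s2) F x = \sum_(x <- s1) F x)%N.
Proof.
move=> u1 u2 sub z.
rewrite (bigID (fun x => x \in s1)) /=.
rewrite [X in (_ + X)%N]big_seq_cond [X in (_ + X)%N]big1 ?addn0; last first.
  by move=> x /ssrbool.andP[xs xn]; apply: z.
rewrite -big_filter; apply: perm_big; apply: uniq_perm; rewrite ?filter_uniq //.
by move=> x; rewrite mem_filter; case: (boolP (x \in s1)) => // xs; rewrite (sub _ xs).
Qed.

Lemma mdeg_seq (js : seq J) (c : {cmonom J}) : uniq js ->
  {subset finsupp c <= js} -> mdeg c = (\sum_(j <- js) c j)%N.
Proof.
move=> u sub; rewrite mdegE; symmetry; apply: sum_sub => //.
by move=> x _; rewrite -cmE_neq0 negbK => /eqP.
Qed.

Lemma mdeg1_ucm (c : {cmonom J}) : mdeg c = 1%N -> exists j, c = ucm j.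
Proof.
move=> h; have: c != 1%M by apply/eqP=> e; move: h; rewrite e mdeg1.
case: (fset_0Vmem (finsupp c)) => [e|[j jc] _].
  by rewrite -mdeg_eq0 mdegE e big_seq_fset0.
exists j.
have js : uniq (j :: filter (predC1 j) (finsupp c)).
  by rewrite /= mem_filter /= eqxx /= filter_uniq // fset_uniq.
have sub : {subset finsupp c <= j :: filter (predC1 j) (finsupp c)}.
  by move=> x xc; rewrite inE mem_filter xc /= andbT; case: eqP.
move: h; rewrite (mdeg_seq js sub) big_cons.
have := jc; rewrite -cmE_neq0.
case E: (c j) => [|[|n]] //= _.
rewrite add1n => -[] /eqP; rewrite sum_nat_seq_eq0 => /allP H.
apply/eqP/cmP=> i; rewrite cmU.
case: eqVneq => [<-//|ne].
have [ic|] := boolP (i \in finsupp c); last by rewrite -cmE_neq0 negbK => /eqP.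
by apply/eqP; apply: (H i); rewrite mem_filter /= eq_sym ne.
Qed.

End Cm.


Section CmEval.
Variables (I : choiceType) (R : comNzRingType) (f : I -> R).

Lemma cmevalEw (k : {cmonom I}) (d : {fset I}) : (finsupp k `<=` d)%fset ->
  cmeval f k = \prod_(i <- d) f i ^+ k i.
Proof.
move=> le; rewrite /cmeval (big_fset_incl _ le) //.
by move=> i _; rewrite -cmE_neq0 negbK => /eqP ->; rewrite expr0.
Qed.

Lemma cmevalM k1 k2 : cmeval f (k1 * k2)%M = cmeval f k1 * cmeval f k2.
Proof.
rewrite [LHS](cmevalEw (fsubset_refl _)) mdomD (cmevalEw (fsubsetUl _ (finsupp k2))).
rewrite (cmevalEw (fsubsetUr (finsupp k1) _)) -big_split /=.
by apply: eq_bigr => i _; rewrite cmM exprD.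
Qed.

Lemma cmevalU i : cmeval f (ucm i) = f i.
Proof. by rewrite /cmeval mdomU big_seq_fset1 cmUU expr1. Qed.

Lemma cmeval1 : cmeval f 1%M = 1.
Proof. by rewrite /cmeval mdom1 big_seq_fset0. Qed.

Lemma cmeval_big (T : Type) (r : seq T) (F : T -> {cmonom I}) :
  cmeval f (\big[mmul/1%M]_(x <- r) F x) = \prod_(x <- r) cmeval f (F x).
Proof. exact: (big_morph _ cmevalM cmeval1). Qed.
End CmEval.

Section Mwt.
Variables (A : comNzRingType) (M : lmodType A).

Lemma mwtEw (k : {cmonom (GVar M)}) (d : {fset GVar M}) : (finsupp k `<=` d)%fset ->
  @mwt A M k = (\sum_(v <- d) k v * v.1)%N.
Proof.
move=> le; rewrite /mwt (big_fset_incl _ le) //.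
by move=> i _; rewrite -cmE_neq0 negbK => /eqP ->.
Qed.

Lemma mwtM (k1 k2 : {cmonom (GVar M)}) : mwt (k1 * k2)%M = (mwt k1 + mwt k2)%N.
Proof.
rewrite [LHS](mwtEw (fsubset_refl _)) mdomD (mwtEw (fsubsetUl _ (finsupp k2))).
rewrite (mwtEw (fsubsetUr (finsupp k1) _)) -big_split /=.
by apply: eq_bigr => i _; rewrite cmM mulnDl.
Qed.

Lemma mwtU (v : GVar M) : mwt (ucm v) = v.1.
Proof. by rewrite /mwt mdomU big_seq_fset1 cmUU mul1n. Qed.

Lemma mwt1 : @mwt A M (1%M : {cmonom (GVar M)}) = 0%N.
Proof. by rewrite /mwt mdom1 big_seq_fset0. Qed.

Lemma mwt_big (T : Type) (r : seq T) (F : T -> {cmonom (GVar M)}) :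
  @mwt A M (\big[mmul/1%M]_(x <- r) F x) = (\sum_(x <- r) mwt (F x))%N.
Proof. exact: (big_morph _ mwtM mwt1). Qed.
End Mwt.


Section Gd.
Variables (A : comNzRingType) (M : lmodType A).

Definition shift (u : GFun M) (w : {cmonom (GVar M)}) : GFun M :=
  fun k => u (k * w)%M.

Lemma glin_is_additive (u : GFun M) : additive (glin u).
Proof. exact: (@mmap_is_additive _ _ _ idfun u). Qed.

HB.instance Definition _ (u : GFun M) :=
  GRing.isAdditive.Build (GPre M) A (glin u) (glin_is_additive u).

Lemma glinU (u : GFun M) (c : A) k : glin u << c *g k >> = c * u k.
Proof. exact: (@mmapU _ _ _ idfun u). Qed.

Lemma gdotE (u v : GFun M) k : gdot u v k = mmap (glin u) v (Delta (<< k >> : GPre M)).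
Proof. by []. Qed.

Lemma DeltaU k : Delta (<< k >> : GPre M) = cmeval (@DeltaVar A M) k.
Proof.
by rewrite /Delta msuppU1 big_seq_fset1 mcoeffUU !mpolyC1E mul1r.
Qed.

Lemma glin_shift (u : GFun M) w (q : GPre M) : glin u (<< w >> * q) = glin (shift u w) q.
Proof.
rewrite [q]monalgE mulr_sumr !raddf_sum /=; apply: eq_bigr => k _.
by rewrite malgM_def fgmulUU mul1r !glinU /shift mulmC.
Qed.

Lemma Pair_shift (u v : GFun M) w1 w2 (T : GPre2 M) :
  mmap (glin u) v (((<< w1 >> : GPre M)%:MP * << w2 >>) * T) =
  mmap (glin (shift u w1)) (shift v w2) T.
Proof.
rewrite [T]monalgE mulr_sumr !raddf_sum /=; apply: eq_bigr => k _.
rewrite !malgM_def !fgmulUU mulr1 mul1m !mmapU.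
transitivity (glin u (<< w1 >> * T@_k) * v (w2 * k)%M); first by [].
by rewrite glin_shift /shift mulmC.
Qed.

Lemma gdot1 (u v : GFun M) : gdot u v 1%M = u 1%M * v 1%M.
Proof.
rewrite gdotE DeltaU cmeval1.
have -> : (1 : GPre2 M) = << (1 : GPre M) *g 1%M >> by [].
rewrite mmapU.
transitivity (glin u << (1:A) *g 1%M >> * v 1%M); first by [].
by rewrite glinU mul1r.
Qed.

Lemma gdot_cons (u v : GFun M) (a : nat) (y : dual M) m :
  gdot u v (ucm ((a, y) : GVar M) * m)%M =
  \sum_(i < a.+1) gdot (shift u (ucm ((i : nat, y) : GVar M)))
                       (shift v (ucm (((a - i)%N, y) : GVar M))) m.
Proof.
rewrite gdotE DeltaU cmevalM cmevalU {1}/DeltaVar /= mulr_suml raddf_sum /=.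
apply: eq_bigr => i _.
transitivity (mmap (glin u) v ((GX i y)%:MP * mvar (GPre M) ((a - i)%N, y)
   * cmeval (@DeltaVar A M) m)); first by [].
by rewrite /GX /mvar Pair_shift gdotE DeltaU.
Qed.
End Gd.


Section Sig.
Variables (A : comNzRingType) (J : choiceType).
Local Notation P := {malg A[{cmonom J}]}.

Definition hsig (j : J) (k : {cmonom J}) : {poly P} :=
  (<< setj j 0 k >> : P)%:P * 'X^(k j).

Lemma hsig_mult j : mmorphism (hsig j).
Proof.
split.
  move=> k1 k2; rewrite /hsig cmM exprD.
  have -> : setj j 0 (k1 * k2)%M = (setj j 0 k1 * setj j 0 k2)%M.
    by apply/eqP/cmP => i; rewrite cmM !setjE cmM; case: eqP.
  have e : (<< (setj j 0 k1 * setj j 0 k2)%M >> : P) = << setj j 0 k1 >> * << setj j 0 k2 >>.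
    by rewrite malgM_def fgmulUU mulr1.
  by rewrite e polyCM mulrACA.
rewrite /hsig cm1 expr0 mulr1.
have -> : setj j 0 1%M = 1%M by apply/eqP/cmP => i; rewrite setjE cm1; case: eqP.
by rewrite polyC1.
Qed.

HB.instance Definition _ j := isMultiplicative.Build {cmonom J} {poly P} (hsig j) (hsig_mult j).

Definition sig j : P -> {poly P} := mmap (polyC \o (@malgC {cmonom J} A)) (hsig j).

Lemma sigM j (p q : P) : sig j (p * q) = sig j p * sig j q.
Proof. exact: rmorphM. Qed.

Lemma sig_coef j d (p : P) (m : {cmonom J}) : m j = 0%N -> ((sig j p)`_d)@_m = p@_(setj j d m).
Proof.
move=> mj; rewrite /sig mmapE coef_sum raddf_sum.
rewrite [in RHS](monalgE p) raddf_sum; apply: eq_bigr => k _ /=.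
rewrite /hsig mulrA -polyCM coefMXn coefC mcoeffU.
case: (eqVneq k (setj j d m)) => [->|ne].
  have e : setj j 0 (setj j d m) = m.
    by apply/eqP/cmP => i; rewrite !setjE; case: eqP => [->|].
  by rewrite setjE eqxx ltnn subnn eqxx e mcoeffCM mcoeffU1 eqxx mulr1.
rewrite mulr0n; case: ltnP => h; first by rewrite mcoeff0.
 case: (eqVneq (d - k j)%N 0%N) => [e|_] /=; last by rewrite mcoeff0.
have kj : k j = d by apply/eqP; rewrite eqn_leq h /= -subn_eq0 e.
rewrite mcoeffCM mcoeffU1; case: (eqVneq (setj j 0 k) m) => [e2|_]; last by rewrite mulr0.
case/eqP: ne; apply/eqP/cmP => i; rewrite setjE.
case: eqP => [->//|ni]; by rewrite -e2 setjE; case: eqP.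
Qed.
Lemma mcoeffM1 (p q : P) : (p * q)@_1%M = p@_1%M * q@_1%M.
Proof. exact: rmorphM. Qed.
End Sig.


Section Rel.
Variables (A : comNzRingType) (M : lmodType A) (J : choiceType) (x : J -> dual M).
Local Notation P := {malg A[{cmonom J}]}.

Definition monc (js : seq J) (c : {cmonom J}) : {cmonom (GVar M)} :=
  \big[mmul/1%M]_(j <- js) ucm ((c j, x j) : GVar M).

Definition Rel (js : seq J) (u : GFun M) (p : P) :=
  forall c : {cmonom J}, {subset finsupp c <= js} -> u (monc js c) = p@_c.

Lemma monc_eq (js : seq J) (c c' : {cmonom J}) : (forall j, j \in js -> c j = c' j) -> monc js c = monc js c'.
Proof. by move=> h; apply: eq_big_seq => j /h ->. Qed.

Lemma notin_supp (js : seq J) (c : {cmonom J}) j : {subset finsupp c <= js} -> j \notin js -> c j = 0%N.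
Proof.
move=> sub nj; apply/eqP; rewrite cmE_eq0; apply/negP => /sub; exact/negP.
Qed.

Lemma R_shift j (js : seq J) (u : GFun M) (p : P) : j \notin js -> Rel (j :: js) u p ->
  forall d, Rel js (shift u (ucm ((d, x j) : GVar M))) ((sig j p)`_d).
Proof.
move=> nj H d c sub; rewrite sig_coef; last exact: notin_supp nj.
rewrite -H; last first.
  move=> i; rewrite -cmE_neq0 setjE inE; case: (eqVneq i j) => [->|_] //= h.
  by apply: sub; rewrite -cmE_neq0.
rewrite /shift /monc big_cons setjE eqxx [in LHS]mulmC; congr (u (_ * _)%M).
apply: eq_big_seq => i ij; rewrite setjE; case: (eqVneq i j) => // e.
by move: nj; rewrite -e ij.
Qed.

Lemma setj_sub (j : J) (js : seq J) (c : {cmonom J}) :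
  {subset finsupp c <= j :: js} -> {subset finsupp (setj j 0 c) <= js}.
Proof.
move=> sub i; rewrite -cmE_neq0 setjE; case: (eqVneq i j) => [->|ne] //= h.
by move: (sub i); rewrite -cmE_neq0 inE (negbTE ne) => /(_ h).
Qed.

Lemma setjK (j : J) (c : {cmonom J}) : setj j (c j) (setj j 0 c) = c.
Proof. by apply/eqP/cmP => i; rewrite !setjE; case: (eqVneq i j) => [->|]. Qed.

Lemma R_prod (js : seq J) : uniq js -> forall (u v : GFun M) (p q : P),
  Rel js u p -> Rel js v q -> Rel js (gdot u v) (p * q).
Proof.
elim: js => [|j js IH] ujs u v p q Hu Hv c sub.
  have sub1 : {subset finsupp (1%M : {cmonom J}) <= [::]}.
    by move=> i; rewrite mdom1 in_fset0.
  have c1 : c = 1%M.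
    by apply/eqP/cmP => i; rewrite cm1; apply: (notin_supp sub).
  have e1 := Hu _ sub1; have e2 := Hv _ sub1.
  rewrite /monc big_nil in e1 e2.
  by rewrite c1 /monc big_nil gdot1 mcoeffM1 e1 e2.
case/andP: ujs => nj ujs.
rewrite /monc big_cons gdot_cons -/(monc js c).
rewrite (monc_eq (c' := setj j 0 c)); last first.
  by move=> i ij; rewrite setjE; case: (eqVneq i j) => // e; move: nj; rewrite -e ij.
have sub' := setj_sub sub.
transitivity (\sum_(i < (c j).+1) ((sig j p)`_i * (sig j q)`_(c j - i))@_(setj j 0 c)).
  apply: eq_bigr => i _.
  by apply: (IH ujs _ _ _ _ (R_shift nj Hu i) (R_shift nj Hv (c j - i))).
rewrite -raddf_sum -coefM -sigM.
have h0 : setj j 0 c j = 0%N by rewrite setjE eqxx.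
have h := sig_coef (c j) (p * q) h0; rewrite setjK in h.
exact: h.
Qed.
Lemma prod_nat_bool (s : seq J) (b : J -> bool) :
  \prod_(j <- s) ((b j)%:R : A) = (all b s)%:R.
Proof.
elim: s => [|j s IH]; first by rewrite big_nil.
by rewrite big_cons IH /= -natrM mulnb.
Qed.

Lemma R_eps (js : seq J) : Rel js (@geps A M) 1.
Proof.
move=> c sub; rewrite /geps /monc cmeval_big mcoeff1.
under eq_bigr do rewrite cmevalU /=.
rewrite prod_nat_bool; congr ((nat_of_bool _)%:R).
apply/idP/idP => [h|/eqP->]; last by apply/allP => i _; rewrite cm1.
apply/cmP => i; rewrite cm1.
case: (boolP (i \in js)) => [ij|ni]; last exact: notin_supp sub ni.
by move/allP: h => /(_ i ij) /eqP.
Qed.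

Definition Wt (m : M) (k : {cmonom (GVar M)}) : A :=
  \sum_(v <- finsupp k) ((k v * (v.1 == 1%N))%N)%:R * v.2 m.

Lemma WtEw m (k : {cmonom (GVar M)}) (d : {fset GVar M}) : (finsupp k `<=` d)%fset ->
  Wt m k = \sum_(v <- d) ((k v * (v.1 == 1%N))%N)%:R * v.2 m.
Proof.
move=> le; rewrite /Wt (big_fset_incl _ le) //.
by move=> i _; rewrite -cmE_neq0 negbK => /eqP ->; rewrite mul0n mul0r.
Qed.

Lemma WtM m (k1 k2 : {cmonom (GVar M)}) : Wt m (k1 * k2)%M = Wt m k1 + Wt m k2.
Proof.
rewrite [LHS](WtEw _ (fsubset_refl _)) mdomD (WtEw _ (fsubsetUl _ (finsupp k2))).
rewrite (WtEw _ (fsubsetUr (finsupp k1) _)) -big_split /=.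
by apply: eq_bigr => i _; rewrite cmM mulnDl natrD mulrDl.
Qed.

Lemma WtU m (v : GVar M) : Wt m (ucm v) = ((v.1 == 1%N) : nat)%:R * v.2 m.
Proof. by rewrite /Wt mdomU big_seq_fset1 cmUU mul1n. Qed.

Lemma Wt1 m : Wt m (1%M : {cmonom (GVar M)}) = 0.
Proof. by rewrite /Wt mdom1 big_seq_fset0. Qed.

Lemma gev_sum (m : M) (k : {cmonom (GVar M)}) : mwt k = 1%N ->
  \sum_(v <- finsupp k | v.1 == 1%N) v.2 m = Wt m k.
Proof.
move=> h; rewrite /Wt big_mkcond /=; apply: eq_big_seq => v vk.
case: eqP => [e|_]; last by rewrite muln0 mul0r.
have : (k v * v.1 <= mwt k)%N.
  by rewrite /mwt (bigD1_seq v) //= ?fset_uniq ?leq_addr.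
rewrite h e muln1 => le.
have : k v != 0%N by rewrite cmE_neq0.
by case: (k v) le => [|[|]] //= _ _; rewrite mul1r.
Qed.

Lemma mwt_monc (js : seq J) (c : {cmonom J}) : uniq js -> {subset finsupp c <= js} ->
  mwt (monc js c) = mdeg c.
Proof.
move=> ujs sub; rewrite /monc mwt_big (mdeg_seq ujs sub).
by apply: eq_bigr => j _; rewrite mwtU.
Qed.

Lemma R_gev (js : seq J) (G : M -> {malg A[J]}) (m : M) : uniq js ->
  (forall j, j \in js -> (G m)@_j = x j m) -> Rel js (gev m) (linpoly (G m)).
Proof.
move=> ujs hg c sub; rewrite /gev (mwt_monc ujs sub).
rewrite /linpoly (big_morph (mcoeff c) (mcoeffD c) (mcoeff0 c)).
under eq_bigr do rewrite mcoeffZ /mvar mcoeffU1.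
case: (eqVneq (mdeg c) 1%N) => [d1|dn1]; last first.
  rewrite big1 // => i _; case: (eqVneq (ucm i) c) => [e|]; last by rewrite mulr0.
  by move: dn1; rewrite -e mdegU eqxx.
have [j0 c0] := mdeg1_ucm d1.
have j0s : j0 \in js by apply: sub; rewrite c0 mdomU in_fset1.
have hm : mwt (monc js c) = 1%N by rewrite (mwt_monc ujs sub).
rewrite (gev_sum _ hm) /monc (big_morph _ (WtM m) (Wt1 m)).
under eq_bigr do rewrite WtU /=.
rewrite (bigD1_seq j0) //= c0 cmUU eqxx mul1r big1 ?addr0; last first.
  by move=> i ne; rewrite cmU [j0 == i]eq_sym (negbTE ne) mul0r.
under eq_bigr do rewrite (inj_eq (@ucm_inj J)).
rewrite -hg // {1}(monalgE (G m)) (big_morph (mcoeff j0) (mcoeffD j0) (mcoeff0 j0)).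
by apply: eq_bigr => i _; rewrite mcoeffU mulr_natr.
Qed.

Lemma R_gevmon (js : seq J) (G : M -> {malg A[J]}) (k : {cmonom M}) : uniq js ->
  (forall m j, j \in js -> (G m)@_j = x j m) ->
  Rel js (gev_mon k) (cmeval (fun m => linpoly (G m)) k).
Proof.
move=> ujs hg; rewrite /gev_mon /cmeval.
apply: (big_ind2 (Rel js)); first exact: R_eps.
  by move=> u1 p1 u2 p2 h1 h2; apply: R_prod.
move=> m _; elim: (k m) => [|n IHn] /=; first by rewrite expr0; exact: R_eps.
by rewrite exprS; apply: R_prod => //; apply: R_gev => // j; apply: hg.
Qed.
End Rel.


Section Hom.
Variables (A : comNzRingType) (J : choiceType).
Local Notation P := {malg A[{cmonom J}]}.

Definition homog (d : nat) (p : P) := forall c, mdeg c != d -> p@_c = 0.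

Lemma homog1 : homog 0 1.
Proof.
move=> c; rewrite mcoeff1; case: (eqVneq c 1%M) => [->|] //.
by rewrite mdeg1.
Qed.

Lemma homog_lin (e : {malg A[J]}) : homog 1 (linpoly e).
Proof.
move=> c dc; rewrite /linpoly (big_morph (mcoeff c) (mcoeffD c) (mcoeff0 c)).
rewrite big1 // => i _; rewrite mcoeffZ /mvar mcoeffU1.
case: (eqVneq (ucm i) c) => [e1|]; last by rewrite mulr0.
by move: dc; rewrite -e1 mdegU.
Qed.

Lemma homog_mul d1 d2 (p q : P) : homog d1 p -> homog d2 q -> homog (d1 + d2) (p * q).
Proof.
move=> hp hq c dc; rewrite mcoeffMl big1 // => k1 _; rewrite big1 // => k2 _.
case: (eqVneq (k1 * k2)%M c) => [e|]; last by rewrite mulr0n.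
case: (eqVneq (mdeg k1) d1) => [e1|n1]; last by rewrite hp // mul0r mul0rn.
case: (eqVneq (mdeg k2) d2) => [e2|n2]; last by rewrite hq // mulr0 mul0rn.
by move: dc; rewrite -e mdegM e1 e2 eqxx.
Qed.

Lemma homog_cmeval (M : lmodType A) (G : M -> {malg A[J]}) (k : {cmonom M}) :
  homog (mdeg k) (cmeval (fun m => linpoly (G m)) k).
Proof.
rewrite mdegE /cmeval.
apply: (big_ind2 homog); first exact: homog1.
  by move=> ? ? ? ? h1 h2; apply: homog_mul.
move=> m _; elim: (k m) => [|n IHn] /=; first by rewrite expr0; exact: homog1.
by rewrite exprS -add1n; apply: homog_mul => //; apply: homog_lin.
Qed.
End Hom.

Section G.
Variables (A : comNzRingType) (M : lmodType A) (J : choiceType) (js : seq J) (x : J -> dual M).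

Definition gfun (m : M) : {malg A[J]} := \sum_(j <- js) x j m *: (<< j >> : {malg A[J]}).

Lemma gfun_is_linear : linear gfun.
Proof.
move=> a u v; rewrite /gfun scaler_sumr -big_split /=; apply: eq_bigr => j _.
by rewrite dfun_lin scalerDl scalerA.
Qed.

HB.instance Definition _ := GRing.isLinear.Build A M {malg A[J]} *:%R gfun gfun_is_linear.

Lemma gfun_coef m j : uniq js -> j \in js -> (gfun m)@_j = x j m.
Proof.
move=> u jj; rewrite /gfun (big_morph (mcoeff j) (mcoeffD j) (mcoeff0 j)).
rewrite (bigD1_seq j) //= mcoeffZ mcoeffU eqxx mulr1n mulr1 big1 ?addr0 // => i ne.
by rewrite mcoeffZ mcoeffU (negbTE ne) mulr0n mulr0.
Qed.
End G.


Section Fin.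
Variables (A : comNzRingType) (M : lmodType A).

Lemma Symmap_coef (I : choiceType) (g : {linear M -> {malg A[I]}}) (s : SymPre M) b :
  (Symmap g s)@_b = \sum_(k <- msupp s) s@_k * (cmeval (fun m => linpoly (g m)) k)@_b.
Proof.
rewrite /Symmap (big_morph (mcoeff b) (mcoeffD b) (mcoeff0 b)).
by apply: eq_bigr => k _; rewrite mcoeffZ.
Qed.

Lemma key (J : choiceType) (x : J -> dual M) (js : seq J) (G : M -> {malg A[J]})
  (s : SymPre M) (c : {cmonom J}) :
  uniq js -> {subset finsupp c <= js} ->
  (forall m j, j \in js -> (G m)@_j = x j m) ->
  SymToGammaDual (mdeg c) s (monc x js c) =
  \sum_(k <- msupp s) s@_k * (cmeval (fun m => linpoly (G m)) k)@_c.
Proof.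
move=> ujs sub hg; rewrite /SymToGammaDual big_mkcond /=; apply: eq_bigr => k _.
case: (eqVneq (mdeg k) (mdeg c)) => [_|ne].
  by rewrite (R_gevmon k ujs hg sub).
by rewrite homog_cmeval ?mulr0 // eq_sym.
Qed.

Lemma dual_lin (I : choiceType) (g : {linear M -> {malg A[I]}}) (j : I) (a : A) (u v : M) :
  (fun m => (g m)@_j) (a *: u + v) = a * (fun m => (g m)@_j) u + (fun m => (g m)@_j) v.
Proof. by rewrite /= linearP mcoeffD mcoeffZ. Qed.

Lemma dir2 (s : SymPre M) : in_ker_SymToGammaDual s -> in_all_Lg s.
Proof.
move=> hk I g; apply/malgP => b; rewrite mcoeff0 Symmap_coef.
pose xd (j : I) : dual M := @Dual A M (fun m => (g m)@_j) (dual_lin g j).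
have sub : {subset finsupp b <= (finsupp b : seq I)} by [].
rewrite -(key (x := xd) s (fset_uniq _) sub) //.
apply: hk; exact: mwt_monc (fset_uniq _) sub.
Qed.
Lemma d0_lin (a : A) (u v : M) :
  (fun _ : M => (0 : A)) (a *: u + v) = a * (fun _ : M => (0 : A)) u + (fun _ : M => (0:A)) v.
Proof. by rewrite /= mulr0 addr0. Qed.

Lemma count_occ (mu : {cmonom (GVar M)}) (w : GVar M) :
  count_mem w (flatten [seq nseq (mu v) v | v <- finsupp mu]) = mu w.
Proof.
rewrite count_flatten -map_comp.
have -> : sumn [seq (count_mem w \o (fun v => nseq (mu v) v)) i | i <- finsupp mu]
  = (\sum_(v <- finsupp mu) ((v == w) * mu v))%N.
  rewrite sumnE big_map; apply: eq_bigr => v _ /=; rewrite count_nseq /=.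
  by rewrite eq_sym.
case: (boolP (w \in finsupp mu)) => [wm|nw].
  rewrite (bigD1_seq w) //= ?fset_uniq // eqxx mul1n big1 ?addn0 //.
  by move=> v /negbTE ->.
rewrite big1_seq; last first.
  move=> v /ssrbool.andP[_ vm]; case: (eqVneq v w) => [e|] //; by move: nw; rewrite -e vm.
by apply/esym/eqP; rewrite cmE_eq0.
Qed.

Lemma dir1 (s : SymPre M) : in_all_Lg s -> in_ker_SymToGammaDual s.
Proof.
move=> hl n mu hmu.
pose d0 : dual M := @Dual A M (fun _ => 0) d0_lin.
pose occ := flatten [seq nseq (mu v) v | v <- finsupp mu].
pose v0 : GVar M := (0%N, d0).
pose js := iota 0 (size occ).
pose x (j : nat) := (nth v0 occ j).2.
pose c : {cmonom nat} := [cmonom (nth v0 occ i).1 | i in [fset i | i in js]]%M.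
have cE i : c i = if i \in js then (nth v0 occ i).1 else 0%N.
  by rewrite /c cmE fsfun_fun !inE.
have ujs : uniq js by apply: iota_uniq.
have sub : {subset finsupp c <= js}.
  by move=> i; rewrite -cmE_neq0 cE; case: (i \in js).
have hmonc : monc x js c = mu.
  have e1 : monc x js c = \big[mmul/1%M]_(v <- occ) ucm v.
    rewrite /monc (big_nth v0) /index_iota subn0.
    by apply: eq_big_seq => j jj; rewrite cE jj /x -surjective_pairing.
  rewrite e1; apply/eqP/cmP => w; rewrite cm_eval_big.
  rewrite -count_occ -/occ.
  have gen (o : seq (GVar M)) : (\sum_(v <- o) ucm v w)%N = count_mem w o.
    elim: o => [|v o IH]; first by rewrite big_nil.
    by rewrite big_cons /= IH cmU.
  exact: gen.
have hg m j : j \in js -> (gfun js x m)@_j = x j m by move=> jj; exact: gfun_coef.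
rewrite -hmonc -hmu -hmonc (mwt_monc x ujs sub).
rewrite (@key _ x js (gfun js x) s c ujs sub hg) -Symmap_coef.
by rewrite hl mcoeff0.
Qed.

Lemma theorem4p2_aux (s : SymPre M) : in_all_Lg s <-> in_ker_SymToGammaDual s.
Proof. by split; [apply: dir1 | apply: dir2]. Qed.
End Fin.

Unset Implicit Arguments.
Set Strict Implicit.

Theorem theorem4p2 (A : comNzRingType) (M : lmodType A) :
  noetherian_ring A -> module_fg M ->
  forall s : SymPre M, in_all_Lg s <-> in_ker_SymToGammaDual s.
Proof. by move=> _ _ s; apply: theorem4p2_aux. Qed.
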